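(* Let $p,r$ be positive integers and $s=p+2r$. Let $\Phi^*:V^*_{ps}(\mathbb{R})\to\mathbb{C}^{r\times p}$ be the map $\Phi^*(X)=WZ^{-1}$, where for $X=(X_0;X_1;X_2;X_3)$ (blocks of $p,p,r,r$ rows) $Z=X_0+iX_1$ and $W=X_2+iX_3$. Then the complex valued components of $\Phi^*$ form an orthogonal harmonic family of $\mathbf{GL}_p(\mathbb{R})$-invariant functions on $V^*_{ps}(\mathbb{R})$, equipped with the Euclidean metric.
   Context: $U^*_{ps}(\mathbb{R})=\{X\in\mathbb{R}^{(p+s)\times p}: X^tX \text{ invertible}\}$ and $V^*_{ps}(\mathbb{R})=\{X\in U^*_{ps}(\mathbb{R}): \det Z\neq0\}$. $\mathbf{GL}_p(\mathbb{R})$ acts by right multiplication. The Euclidean metric is $\langle X,Y\rangle=\mathrm{trace}(X^tY)$. For a Riemannian manifold $(M,g)$ and complex functions $\phi,\psi$, $\tau(\phi)$ is the Laplace–Beltrami operator (extended complex-linearly) and $\kappa(\phi,\psi)=g(\mathrm{grad}\,\phi,\mathrm{grad}\,\psi)$ with $g$ extended complex-bilinearly. A set $\Omega$ of complex functions is an orthogonal harmonic family if $\tau(\phi)=0$ and $\kappa(\phi,\psi)=0$ for all $\phi,\psi\in\Omega$. *)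

(* Defs.v *)
From HB Require Import structures.
From mathcomp Require Import all_boot all_order all_algebra.
From mathcomp Require Import all_classical all_reals all_analysis.
From mathcomp Require Import complex.
Set Implicit Arguments. Unset Strict Implicit. Unset Printing Implicit Defensive.
Import Order.TTheory GRing.Theory Num.Theory.
Local Open Scope ring_scope.
Local Open Scope classical_set_scope.

Section Defs.
Variable R : realType.

(* Standard coordinates of 'M[R]_(m,n) are the entries x_{kl}; the Euclidean
   metric <X,Y> = trace (X^T Y) makes the delta_mx k l an orthonormal basis. *)

Definition rpartial m n (f : 'M[R]_(m, n) -> R) (k : 'I_m) (l : 'I_n)
  (X : 'M[R]_(m, n)) : R :=
  derive1 (fun t : R => f (X + t *: delta_mx k l)) 0.

Definition cpartial m n (f : 'M[R]_(m, n) -> R[i]) (k : 'I_m) (l : 'I_n)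
  (X : 'M[R]_(m, n)) : R[i] :=
  Complex (rpartial (fun Y => complex.Re (f Y)) k l X) (rpartial (fun Y => complex.Im (f Y)) k l X).

(* tension field = Laplace-Beltrami operator of the Euclidean metric,
   extended complex-linearly *)
Definition tau m n (f : 'M[R]_(m, n) -> R[i]) (X : 'M[R]_(m, n)) : R[i] :=
  \sum_(k < m) \sum_(l < n) cpartial (cpartial f k l) k l X.

(* conformality operator kappa(f,g) = g(grad f, grad g), metric extended
   complex-bilinearly *)
Definition kappa m n (f g : 'M[R]_(m, n) -> R[i]) (X : 'M[R]_(m, n)) : R[i] :=
  \sum_(k < m) \sum_(l < n) cpartial f k l X * cpartial g k l X.

Definition orthogonal_harmonic_family m n (U : set 'M[R]_(m, n))
  (Omega : set ('M[R]_(m, n) -> R[i])) : Prop :=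
  forall phi psi, Omega phi -> Omega psi ->
    forall X, U X -> tau phi X = 0 /\ kappa phi psi X = 0.

Variables p r : nat.
(* s = p + 2r, so p + s = p + (p + (r + r)); rows split into blocks p,p,r,r *)
Definition sdim := (p + (r + r))%N.
Definition Mat := 'M[R]_(p + (p + (r + r)), p).

Definition blk0 (X : Mat) : 'M[R]_p := \matrix_(i < p, j < p) X (lshift _ i) j.
Definition blk1 (X : Mat) : 'M[R]_p :=
  \matrix_(i < p, j < p) X (rshift p (lshift (r + r) i)) j.
Definition blk2 (X : Mat) : 'M[R]_(r, p) :=
  \matrix_(i < r, j < p) X (rshift p (rshift p (lshift r i))) j.
Definition blk3 (X : Mat) : 'M[R]_(r, p) :=
  \matrix_(i < r, j < p) X (rshift p (rshift p (rshift r i))) j.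

Definition Zof (X : Mat) : 'M[R[i]]_p :=
  \matrix_(i, j) Complex (blk0 X i j) (blk1 X i j).
Definition Wof (X : Mat) : 'M[R[i]]_(r, p) :=
  \matrix_(i, j) Complex (blk2 X i j) (blk3 X i j).

Definition Ustar : set Mat := [set X | \det (X^T *m X) != 0].
Definition Vstar : set Mat := [set X | Ustar X /\ \det (Zof X) != 0].

Definition Phistar (X : Mat) : 'M[R[i]]_(r, p) := Wof X *m invmx (Zof X).

Definition GL_invariant (f : Mat -> R[i]) : Prop :=
  forall (X : Mat) (A : 'M[R]_p), Vstar X -> \det A != 0 -> f (X *m A) = f X.

End Defs.

(* Main.v *)
Require Import Defs.
From HB Require Import structures.
From mathcomp Require Import all_boot all_order all_algebra.
From mathcomp Require Import all_classical all_reals all_analysis.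
From mathcomp Require Import complex.
Import Order.TTheory GRing.Theory Num.Theory.
From mathcomp Require Import ring lra.
Import numFieldNormedType.Exports.
Local Open Scope ring_scope.
Local Open Scope classical_set_scope.
Set Implicit Arguments. Unset Strict Implicit.


Section Calc.
Variable R : realType.
Local Notation C := (R[i]).

Definition cder (h : R -> C) (x : R) (d : C) :=
  is_derive x (1:R) (fun t => complex.Re (h t)) (complex.Re d) /\
  is_derive x (1:R) (fun t => complex.Im (h t)) (complex.Im d).

Lemma is_derive_ext (f g : R -> R) x v d : (forall t, f t = g t) ->
  is_derive x v g d -> is_derive x v f d.
Proof. by move=> fg; have -> : f = g by apply/funext. Qed.

Lemma cder_cst (a : C) x : cder (fun _ => a) x 0.
Proof. by split; apply: is_derive_cst. Qed.

Lemma cder_id x : cder (fun t => t%:C)%C x 1.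
Proof. split; [exact: is_derive_id | exact: is_derive_cst]. Qed.

Lemma cder_add f g x df dg : cder f x df -> cder g x dg ->
  cder (fun t => f t + g t) x (df + dg).
Proof.
move=> [f1 f2] [g1 g2]; split.
  apply: (@is_derive_ext _ (fun t => complex.Re (f t) + complex.Re (g t))).
    by move=> t; case: (f t) => ? ?; case: (g t).
  by case: df f1 f2 => ? ? /= *; case: dg g1 g2 => ? ? /= *; apply: is_deriveD.
apply: (@is_derive_ext _ (fun t => complex.Im (f t) + complex.Im (g t))).
  by move=> t; case: (f t) => ? ?; case: (g t).
by case: df f1 f2 => ? ? /= *; case: dg g1 g2 => ? ? /= *; apply: is_deriveD.
Qed.

Lemma ReM (u v : C) : complex.Re (u * v) = complex.Re u * complex.Re v - complex.Im u * complex.Im v.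
Proof. by case: u; case: v. Qed.
Lemma ImM (u v : C) : complex.Im (u * v) = complex.Re u * complex.Im v + complex.Im u * complex.Re v.
Proof. by case: u => ? ?; case: v => ? ? /=; rewrite addrC. Qed.

Lemma is_derive_ext2 (f g : R -> R) x v d d' : (forall t, f t = g t) ->
  is_derive x v g d' -> d' = d -> is_derive x v f d.
Proof. by move=> fg H <-; have -> : f = g by apply/funext. Qed.

Lemma cder_mul f g x df dg : cder f x df -> cder g x dg ->
  cder (fun t => f t * g t) x (f x * dg + df * g x).
Proof.
move=> [f1 f2] [g1 g2]; split.
  apply: is_derive_ext2 (is_deriveB (is_deriveM f1 g1) (is_deriveM f2 g2)) _.
    by move=> t; rewrite ReM.
  move: f1 f2 g1 g2; case: (f x) => a b; case: (g x) => c d; case: df => e h; case: dg => k l /= *.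
  by rewrite /GRing.scale /=; ring.
apply: is_derive_ext2 (is_deriveD (is_deriveM f1 g2) (is_deriveM f2 g1)) _.
  by move=> t; rewrite ImM.
move: f1 f2 g1 g2; case: (f x) => a b; case: (g x) => c d; case: df => e h; case: dg => k l /= *.
by rewrite /GRing.scale /=; ring.
Qed.
Lemma ReV (u : C) : complex.Re (u^-1) = complex.Re u / (complex.Re u ^+ 2 + complex.Im u ^+ 2).
Proof. by case: u. Qed.
Lemma ImV (u : C) : complex.Im (u^-1) = - (complex.Im u / (complex.Re u ^+ 2 + complex.Im u ^+ 2)).
Proof. by case: u. Qed.

Lemma is_deriveV' (f : R -> R) x v df : is_derive x v f df -> f x != 0 ->
  is_derive x v (fun y => (f y)^-1) (- (f x)^-2 *: df).
Proof.
move=> [fd <-] fx0; apply: DeriveDef; first exact: derivableV.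
exact: deriveV.
Qed.

Lemma normc2_neq0 (u : C) : u != 0 -> complex.Re u ^+ 2 + complex.Im u ^+ 2 != 0.
Proof.
case: u => a b /= u0; apply/negP; rewrite paddr_eq0 ?sqr_ge0 // !sqrf_eq0.
by case/andP => /eqP a0 /eqP b0; move: u0; rewrite a0 b0 eqxx.
Qed.

Lemma cder_inv h x dh : h x != 0 -> cder h x dh ->
  cder (fun t => (h t)^-1) x (- dh / (h x * h x)).
Proof.
move=> hx0 [h1 h2].
have n0 := normc2_neq0 hx0.
have hN := is_deriveD (is_deriveM h1 h1) (is_deriveM h2 h2).
have hNV := is_deriveV' hN n0.
split.
  apply: is_derive_ext2 (is_deriveM h1 hNV) _.
    by move=> t; rewrite ReV /= !expr2.
  rewrite !fctE /=; clear h1 h2 hN hNV.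
  move: hx0 n0; case: (h x) => a b; case: dh => e k /= _ n0.
  rewrite /GRing.scale /=.
  field.
  have -> : (a * a - b * b) ^+ 2 + (a * b + b * a) ^+ 2 = (a ^+ 2 + b ^+ 2) ^+ 2 by ring.
  by rewrite expf_neq0 // -!expr2 n0.
apply: is_derive_ext2 (is_deriveN (is_deriveM h2 hNV)) _.
  by move=> t; rewrite ImV /= !expr2.
rewrite !fctE /=; clear h1 h2 hN hNV.
move: hx0 n0; case: (h x) => a b; case: dh => e k /= _ n0.
rewrite /GRing.scale /=.
field.
have -> : (a * a - b * b) ^+ 2 + (a * b + b * a) ^+ 2 = (a ^+ 2 + b ^+ 2) ^+ 2 by ring.
by rewrite expf_neq0 // -!expr2 n0.
Qed.
Lemma cder_ext f g x d d' : (forall t, f t = g t) -> cder g x d -> d = d' -> cder f x d'.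
Proof. by move=> fg H <-; have -> : f = g by apply/funext. Qed.

Lemma cder_sum (I : finType) (F : I -> R -> C) dF x :
  (forall i, cder (F i) x (dF i)) ->
  cder (fun t => \sum_i F i t) x (\sum_i dF i).
Proof.
move=> H; rewrite /index_enum.
elim: (Finite.enum I) => [|i s IH].
  by apply: cder_ext (cder_cst 0 x) _; [move=> t; rewrite big_nil | rewrite big_nil].
apply: cder_ext (cder_add (H i) IH) _; [by move=> t; rewrite big_cons | by rewrite big_cons].
Qed.

Lemma cder_near (f g : R -> C) (x : R) d : cder g x d -> (\forall t \near x, f t = g t) -> cder f x d.
Proof.
move=> [g1 g2] N; split.
  apply: near_eq_is_derive g1; apply: filterS N => t ->; done.
apply: near_eq_is_derive g2; apply: filterS N => t ->; done.
Qed.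

Lemma cpartial_cder m n (f : 'M[R]_(m, n) -> C) k l X d :
  cder (fun t => f (X + t *: delta_mx k l)) 0 d -> cpartial f k l X = d.
Proof.
case=> [h1 h2]; rewrite /cpartial /rpartial !derive1E.
by rewrite !derive_val; case: d {h1 h2}.
Qed.
End Calc.


Section Mx.
Variable F : fieldType.

Lemma mul_delta_l n q m (k : 'I_n) (l : 'I_q) (A : 'M[F]_(q, m)) i j :
  (delta_mx k l *m A) i j = (i == k)%:R * A l j.
Proof.
rewrite mxE (bigD1 l) //= big1 ?addr0; last first.
  by move=> q0 ql; rewrite mxE (negbTE ql) andbF mul0r.
by rewrite mxE eqxx andbT.
Qed.

Lemma mul_delta_r n m q (k : 'I_m) (l : 'I_q) (A : 'M[F]_(n, m)) i j :
  (A *m delta_mx k l) i j = A i k * (j == l)%:R.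
Proof.
rewrite mxE (bigD1 k) //= big1 ?addr0; last first.
  by move=> q0 qk; rewrite mxE (negbTE qk) mulr0.
by rewrite mxE eqxx.
Qed.

Lemma delta_mul_delta n (k l : 'I_n) (A : 'M[F]_n) :
  delta_mx k l *m A *m delta_mx k l = A l k *: delta_mx k l.
Proof.
apply/matrixP => i j; rewrite mul_delta_r mul_delta_l !mxE.
by case: (i == k); case: (j == l); rewrite /= ?mul1r ?mul0r ?mulr0 ?mulr1.
Qed.

Lemma invmx_eq n (M N : 'M[F]_n) : M *m N = 1%:M -> invmx M = N /\ M \in unitmx.
Proof.
move=> MN; have [uM _] := mulmx1_unit MN; split => //.
by rewrite -[RHS](mulKmx uM) MN mulmx1.
Qed.

Lemma sherman n (Z : 'M[F]_n) (u : F) k l : Z \in unitmx ->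
  1 + u * invmx Z l k != 0 ->
  invmx (Z + u *: delta_mx k l) =
    invmx Z - (u / (1 + u * invmx Z l k)) *: (invmx Z *m delta_mx k l *m invmx Z)
  /\ Z + u *: delta_mx k l \in unitmx.
Proof.
move=> uZ nz; apply: invmx_eq.
set Zi := invmx Z; set E := delta_mx k l; set s := (u / _).
rewrite mulmxDl !mulmxBr mulmxV // -!scalemxAr -!scalemxAl !mulmxA mulmxV // mul1mx.
rewrite delta_mul_delta -scalemxAl !scalerA.
have hu : u = s + s * (u * Zi l k).
  by rewrite -[s in s + _]mulr1 -mulrDr /s divfK.
by rewrite [in u *: _]hu scalerDl mulrA addrK subrK.
Qed.
End Mx.

Section Main.
Variables (R : realType) (p r : nat).
Local Notation C := (R[i]).
Local Notation Mat := (Mat R p r).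

Lemma complex_eq (a b c d : R) : a = c -> b = d -> Complex a b = Complex c d.
Proof. by move=> -> ->. Qed.

Lemma lineZ0 (k L : 'I_p) (X : Mat) (t : R) :
  Zof (X + t *: delta_mx (lshift (p + (r + r)) k) L) = Zof X + ((t%:C)%C * 1) *: delta_mx k L.
Proof.
apply/matrixP => i j; rewrite !mxE; rewrite ?(eq_lshift, eq_rshift, eq_rlshift, eq_lrshift) /=.
by case: (i == _); case: (j == L); rewrite /=; apply: complex_eq; ring.
Qed.

Lemma lineW0 (k L : 'I_p) (X : Mat) (t : R) :
  Wof (X + t *: delta_mx (lshift (p + (r + r)) k) L) = Wof X + (t%:C)%C *: 0.
Proof.
rewrite ?mulr0 ?scaler0 ?scale0r addr0.
apply/matrixP => i j; rewrite !mxE; rewrite ?(eq_lshift, eq_rshift, eq_rlshift, eq_lrshift) /=.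
by apply: complex_eq; ring.
Qed.

Lemma lineZ1 (k L : 'I_p) (X : Mat) (t : R) :
  Zof (X + t *: delta_mx (rshift p (lshift (r + r) k)) L) = Zof X + ((t%:C)%C * 'i%C) *: delta_mx k L.
Proof.
apply/matrixP => i j; rewrite !mxE; rewrite ?(eq_lshift, eq_rshift, eq_rlshift, eq_lrshift) /=.
by case: (i == _); case: (j == L); rewrite /=; apply: complex_eq; ring.
Qed.

Lemma lineW1 (k L : 'I_p) (X : Mat) (t : R) :
  Wof (X + t *: delta_mx (rshift p (lshift (r + r) k)) L) = Wof X + (t%:C)%C *: 0.
Proof.
rewrite ?mulr0 ?scaler0 ?scale0r addr0.
apply/matrixP => i j; rewrite !mxE; rewrite ?(eq_lshift, eq_rshift, eq_rlshift, eq_lrshift) /=.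
by apply: complex_eq; ring.
Qed.

Lemma lineZ2 (a : 'I_r) (L : 'I_p) (X : Mat) (t : R) :
  Zof (X + t *: delta_mx (rshift p (rshift p (lshift r a))) L) = Zof X + ((t%:C)%C * 0) *: delta_mx L L.
Proof.
rewrite ?mulr0 ?scaler0 ?scale0r addr0.
apply/matrixP => i j; rewrite !mxE; rewrite ?(eq_lshift, eq_rshift, eq_rlshift, eq_lrshift) /=.
by apply: complex_eq; ring.
Qed.

Lemma lineW2 (a : 'I_r) (L : 'I_p) (X : Mat) (t : R) :
  Wof (X + t *: delta_mx (rshift p (rshift p (lshift r a))) L) = Wof X + (t%:C)%C *: (1 *: delta_mx a L).
Proof.
apply/matrixP => i j; rewrite !mxE; rewrite ?(eq_lshift, eq_rshift, eq_rlshift, eq_lrshift) /=.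
by case: (i == _); case: (j == L); rewrite /=; apply: complex_eq; ring.
Qed.

Lemma lineZ3 (a : 'I_r) (L : 'I_p) (X : Mat) (t : R) :
  Zof (X + t *: delta_mx (rshift p (rshift p (rshift r a))) L) = Zof X + ((t%:C)%C * 0) *: delta_mx L L.
Proof.
rewrite ?mulr0 ?scaler0 ?scale0r addr0.
apply/matrixP => i j; rewrite !mxE; rewrite ?(eq_lshift, eq_rshift, eq_rlshift, eq_lrshift) /=.
by apply: complex_eq; ring.
Qed.

Lemma lineW3 (a : 'I_r) (L : 'I_p) (X : Mat) (t : R) :
  Wof (X + t *: delta_mx (rshift p (rshift p (rshift r a))) L) = Wof X + (t%:C)%C *: ('i%C *: delta_mx a L).
Proof.
apply/matrixP => i j; rewrite !mxE; rewrite ?(eq_lshift, eq_rshift, eq_rlshift, eq_lrshift) /=.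
by case: (i == _); case: (j == L); rewrite /=; apply: complex_eq; ring.
Qed.


Lemma C0 : ((0:R)%:C)%C = 0 :> C. Proof. by []. Qed.

Lemma realC_inj (a b : R) : (a%:C)%C = (b%:C)%C :> C -> a = b.
Proof. by case. Qed.

Lemma near0_neq (t1 : R) : t1 != 0 -> \forall t \near (0:R), t != t1.
Proof.
move=> t10; exists `|t1|; first by rewrite /= normr_gt0.
move=> t /=; rewrite sub0r normrN => h; apply/eqP => tt1.
by rewrite tt1 ltxx in h.
Qed.

Lemma near_nz (w : C) : \forall t \near (0:R), 1 + (t%:C)%C * w != 0.
Proof.
case: (pselect (exists t1 : R, 1 + (t1%:C)%C * w = 0)) => [[t1 H1]|H]; last first.
  by near=> t; apply/eqP => h; apply: H; exists t.
have t10 : t1 != 0.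
  by apply/eqP => t10; move: H1; rewrite t10 C0 mul0r addr0 => /eqP; rewrite oner_eq0.
apply: filterS (near0_neq t10) => t tt1; apply/eqP => h.
have : ((t - t1)%:C)%C * w = 0.
  have -> : ((t - t1)%:C)%C = (t%:C)%C - (t1%:C)%C :> C by rewrite rmorphB.
  by rewrite mulrBl; apply/eqP; rewrite subr_eq0; apply/eqP; apply: (addrI 1); rewrite h H1.
move/eqP; rewrite mulf_eq0 => /orP [/eqP|/eqP w0].
  by move/(@realC_inj _ 0)/eqP; rewrite subr_eq0 (negbTE tt1).
by move: H1; rewrite w0 mulr0 addr0 => /eqP; rewrite oner_eq0.
Unshelve. all: by end_near. Qed.

Definition Zi (X : Mat) := invmx (Zof X).

Lemma mul_mx_delta_mx n m q (A : 'M[C]_(n, m)) (k : 'I_m) (l : 'I_q) (B : 'M[C]_(q, n)) i j :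
  (A *m delta_mx k l *m B) i j = A i k * B l j.
Proof.
rewrite -mulmxA mxE (bigD1 k) //= big1 ?addr0; last first.
  by move=> q' qk; rewrite mul_delta_l (negbTE qk) mul0r mulr0.
by rewrite mul_delta_l eqxx mul1r.
Qed.

Lemma cder_lin (a w : C) x : cder (fun t => a + (t%:C)%C * w) x w.
Proof.
apply: cder_ext (cder_add (cder_cst a x) (cder_mul (cder_id x) (cder_cst w x))) _ => //.
by rewrite mulr0 mul1r !add0r.
Qed.

Lemma entry_subZ n m (A B : 'M[C]_(n, m)) (a : C) i j : (A - a *: B) i j = A i j - a * B i j.
Proof. by rewrite !mxE. Qed.

Lemma entry_addZ n m (A B : 'M[C]_(n, m)) (a : C) i j : (A + a *: B) i j = A i j + a * B i j.
Proof. by rewrite !mxE. Qed.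

Lemma cder_near' (f g : R -> C) (x : R) d d' : cder g x d -> d = d' ->
  (\forall t \near x, f t = g t) -> cder f x d'.
Proof. by move=> H <-; apply: cder_near. Qed.

Section Dir.
Variables (K : 'I_(p + (p + (r + r)))) (L k : 'I_p) (c : C) (dW : 'M[C]_(r, p)).
Hypothesis HZ : forall (X : Mat) (t : R),
  Zof (X + t *: delta_mx K L) = Zof X + ((t%:C)%C * c) *: delta_mx k L.
Hypothesis HW : forall (X : Mat) (t : R),
  Wof (X + t *: delta_mx K L) = Wof X + (t%:C)%C *: dW.

Lemma Zi_line (X : Mat) (t : R) : Zof X \in unitmx ->
  1 + (t%:C)%C * (c * Zi X L k) != 0 ->
  Zi (X + t *: delta_mx K L) = Zi X - (((t%:C)%C * c) / (1 + (t%:C)%C * (c * Zi X L k))) *: (Zi X *m delta_mx k L *m Zi X)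
  /\ Zof (X + t *: delta_mx K L) \in unitmx.
Proof.
move=> uZ nz; rewrite /Zi HZ mulrA; apply: sherman => //.
by rewrite -mulrA.
Qed.

Lemma near_unit (X : Mat) : Zof X \in unitmx ->
  \forall t \near (0:R), Zof (X + t *: delta_mx K L) \in unitmx.
Proof.
move=> uZ; apply: filterS (near_nz (c * Zi X L k)) => t nz.
by have [] := Zi_line uZ nz.
Qed.

Lemma dZi (X : Mat) m j : Zof X \in unitmx ->
  cder (fun t => Zi (X + t *: delta_mx K L) m j) 0 (- c * Zi X m k * Zi X L j).
Proof.
move=> uZ.
pose g := fun t : R => Zi X m j + ((0 + (t%:C)%C * (- c)) * (1 + (t%:C)%C * (c * Zi X L k))^-1) * (Zi X m k * Zi X L j).
have Hg : cder g 0 (- c * Zi X m k * Zi X L j).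
  apply: cder_ext (cder_add (cder_cst _ _) (cder_mul (cder_mul (cder_lin 0 (- c) 0) (cder_inv _ (cder_lin 1 (c * Zi X L k) 0))) (cder_cst _ _))) _ => //.
    by rewrite C0 mul0r addr0 oner_neq0.
  by rewrite C0 !mul0r !addr0 !add0r invr1 !mul0r !add0r !mulr1 !mulrA.
apply: cder_near Hg _; apply: filterS (near_nz (c * Zi X L k)) => t nz.
have [-> _] := Zi_line uZ nz.
by rewrite /g entry_subZ mul_mx_delta_mx add0r; ring.
Qed.


Lemma dPhi (X : Mat) b j : Zof X \in unitmx ->
  cder (fun t => Phistar (X + t *: delta_mx K L) b j) 0
    ((dW *m Zi X) b j - c * Phistar X b k * Zi X L j).
Proof.
move=> uZ.
have H : forall m, cder (fun t => (Wof X b m + (t%:C)%C * dW b m) * Zi (X + t *: delta_mx K L) m j) 0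
   ((Wof X b m + 0 * dW b m) * (- c * Zi X m k * Zi X L j) + dW b m * Zi (X + 0 *: delta_mx K L) m j).
  move=> m; exact: cder_mul (cder_lin _ _ 0) (dZi m j uZ).
apply: cder_ext (cder_sum H) _.
  by move=> t; rewrite /Phistar mxE HW; apply: eq_bigr => m _; rewrite entry_addZ.
rewrite scale0r addr0; under eq_bigr do rewrite mul0r addr0.
rewrite /Phistar -/(Zi X) big_split /= addrC.
move: (Wof X) (Zi X) => W Z.
congr (_ + _); first by rewrite mxE.
rewrite mxE mulr_sumr mulr_suml -sumrN; apply: eq_bigr => m _; ring.
Qed.

Lemma dPhi_cp (X : Mat) b j : Zof X \in unitmx ->
  cpartial (fun Y => Phistar Y b j) K L X = (dW *m Zi X) b j - c * Phistar X b k * Zi X L j.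
Proof. by move=> uZ; apply: cpartial_cder; exact: dPhi. Qed.

Lemma d2Phi (X : Mat) b j : Zof X \in unitmx ->
  cpartial (cpartial (fun Y => Phistar Y b j) K L) K L X =
  - (c *+ 2) * (dW *m Zi X) b k * Zi X L j + (c ^+ 2 *+ 2) * Phistar X b k * Zi X L k * Zi X L j.
Proof.
move=> uZ; apply: cpartial_cder.
have H1 : forall m, cder (fun t => dW b m * Zi (X + t *: delta_mx K L) m j) 0
   (dW b m * (- c * Zi X m k * Zi X L j) + 0 * Zi (X + 0 *: delta_mx K L) m j).
  move=> m; exact: cder_mul (cder_cst _ 0) (dZi m j uZ).
have T1 := cder_sum H1.
have T2 := cder_mul (cder_mul (cder_cst (- c) 0) (dPhi b k uZ)) (dZi L j uZ).
have T := cder_add T1 T2.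
apply: (cder_near' T) => /=.
  rewrite scale0r addr0 !mul0r !addr0; under eq_bigr do rewrite mul0r addr0.
  have -> : \sum_m dW b m * (- c * Zi X m k * Zi X L j) = - c * (dW *m Zi X) b k * Zi X L j.
    by rewrite [(dW *m _) _ _]mxE mulr_sumr mulr_suml; apply: eq_bigr => m _; ring.
  ring.
apply: filterS (near_unit uZ) => t u.
rewrite dPhi_cp // mxE; congr (_ + _); ring.
Qed.
End Dir.

Lemma sum_complex (I : finType) (f g : I -> R) :
  \sum_i ((f i +i* g i)%C : C) = ((\sum_i f i) +i* (\sum_i g i))%C.
Proof.
rewrite /index_enum; elim: (Finite.enum I) => [|i s IH]; first by rewrite !big_nil.
by rewrite !big_cons IH.
Qed.

Lemma Zof_mul (X : Mat) (A : 'M[R]_p) :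
  Zof (X *m A) = Zof X *m map_mx (real_complex R) A.
Proof.
apply/matrixP => i j; rewrite !mxE.
under [RHS]eq_bigr do rewrite !mxE.
rewrite sum_complex; apply: complex_eq; apply: eq_bigr => m _; ring.
Qed.

Lemma Wof_mul (X : Mat) (A : 'M[R]_p) :
  Wof (X *m A) = Wof X *m map_mx (real_complex R) A.
Proof.
apply/matrixP => i j; rewrite !mxE.
under [RHS]eq_bigr do rewrite !mxE.
rewrite sum_complex; apply: complex_eq; apply: eq_bigr => m _; ring.
Qed.

Lemma GL_inv (X : Mat) (A : 'M[R]_p) a j : Zof X \in unitmx -> \det A != 0 ->
  Phistar (X *m A) a j = Phistar X a j.
Proof.
move=> uZ dA.
set A' := map_mx (real_complex R) A.
have uA : A' \in unitmx.
  rewrite unitmxE det_map_mx unitfE; apply/eqP => /(@realC_inj _ 0) /eqP.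
  by rewrite (negbTE dA).
have hinv : invmx (Zof X *m A') = invmx A' *m invmx (Zof X).
  apply: (proj1 (invmx_eq _)); rewrite mulmxA -(mulmxA (Zof X)) mulmxV // mulmx1 mulmxV //.
by rewrite /Phistar Zof_mul Wof_mul hinv !mulmxA mulmxK.
Qed.

Lemma mx0E m n (i : 'I_m) (j : 'I_n) : (0 : 'M[C]_(m, n)) i j = 0.
Proof. by rewrite mxE. Qed.

Lemma entryZ n m (a : C) (M : 'M[C]_(n, m)) i j : (a *: M) i j = a * M i j.
Proof. by rewrite mxE. Qed.

Lemma i2 : ('i%C : C) ^+ 2 = -1. Proof. exact: sqr_i. Qed.

Lemma tau01 (X : Mat) b j (k L : 'I_p) : Zof X \in unitmx ->
  cpartial (cpartial (fun Y => Phistar Y b j) (lshift (p + (r + r)) k) L) (lshift (p + (r + r)) k) L X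
  + cpartial (cpartial (fun Y => Phistar Y b j) (rshift p (lshift (r + r) k)) L) (rshift p (lshift (r + r) k)) L X = 0.
Proof.
move=> uZ.
have H0 := d2Phi (lineZ0 k L) (lineW0 k L) b j uZ.
have H1 := d2Phi (lineZ1 k L) (lineW1 k L) b j uZ.
apply: (eq_trans (congr2 +%R H0 H1)).
rewrite !mul0mx !mx0E i2 !mulr0 !mul0r !add0r expr1n.
move: (Phistar X b k) (Zi X L k) (Zi X L j) => u v w; ring.
Qed.
End Main.


Lemma kill (R : realType) (w x y : R[i]) : w ^+ 2 = -1 -> x * y + (w * x) * (w * y) = 0.
Proof.
move=> h; have -> : x * y + (w * x) * (w * y) = (1 + w ^+ 2) * (x * y) by ring.
by rewrite h subrr mul0r.
Qed.

Section Main2.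
Variables (R : realType) (p r : nat).
Local Notation C := (R[i]).
Local Notation Mat := (Mat R p r).

Lemma tau2 (X : Mat) b j (a : 'I_r) (L : 'I_p) : Zof X \in unitmx ->
  cpartial (cpartial (fun Y => Phistar Y b j) (rshift p (rshift p (lshift r a))) L) (rshift p (rshift p (lshift r a))) L X = 0.
Proof.
move=> uZ; apply: (eq_trans (d2Phi (lineZ2 a L) (lineW2 a L) b j uZ)).
by rewrite mul0rn expr0n /= mul0rn !mul0r oppr0 !mul0r addr0.
Qed.

Lemma tau3 (X : Mat) b j (a : 'I_r) (L : 'I_p) : Zof X \in unitmx ->
  cpartial (cpartial (fun Y => Phistar Y b j) (rshift p (rshift p (rshift r a))) L) (rshift p (rshift p (rshift r a))) L X = 0.
Proof.
move=> uZ; apply: (eq_trans (d2Phi (lineZ3 a L) (lineW3 a L) b j uZ)).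
by rewrite mul0rn expr0n /= mul0rn !mul0r oppr0 !mul0r addr0.
Qed.

Lemma kap01 (X : Mat) b j b' j' (k L : 'I_p) : Zof X \in unitmx ->
  cpartial (fun Y => Phistar Y b j) (lshift (p + (r + r)) k) L X *
  cpartial (fun Y => Phistar Y b' j') (lshift (p + (r + r)) k) L X
  + cpartial (fun Y => Phistar Y b j) (rshift p (lshift (r + r) k)) L X *
    cpartial (fun Y => Phistar Y b' j') (rshift p (lshift (r + r) k)) L X = 0.
Proof.
move=> uZ.
have H0 := dPhi_cp (lineZ0 k L) (lineW0 k L) b j uZ.
have H0' := dPhi_cp (lineZ0 k L) (lineW0 k L) b' j' uZ.
have H1 := dPhi_cp (lineZ1 k L) (lineW1 k L) b j uZ.
have H1' := dPhi_cp (lineZ1 k L) (lineW1 k L) b' j' uZ.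
apply: (eq_trans (congr2 +%R (congr2 *%R H0 H0') (congr2 *%R H1 H1'))).
rewrite !mul0mx !mx0E !sub0r.
move: (Phistar X b k) (Zi X L j) (Phistar X b' k) (Zi X L j') => A A' B B'.
rewrite -[RHS](kill (A * A') (B * B') (@i2 R)); ring.
Qed.

Lemma kap23 (X : Mat) b j b' j' (a : 'I_r) (L : 'I_p) : Zof X \in unitmx ->
  cpartial (fun Y => Phistar Y b j) (rshift p (rshift p (lshift r a))) L X *
  cpartial (fun Y => Phistar Y b' j') (rshift p (rshift p (lshift r a))) L X
  + cpartial (fun Y => Phistar Y b j) (rshift p (rshift p (rshift r a))) L X *
    cpartial (fun Y => Phistar Y b' j') (rshift p (rshift p (rshift r a))) L X = 0.
Proof.
move=> uZ.
have H0 := dPhi_cp (lineZ2 a L) (lineW2 a L) b j uZ.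
have H0' := dPhi_cp (lineZ2 a L) (lineW2 a L) b' j' uZ.
have H1 := dPhi_cp (lineZ3 a L) (lineW3 a L) b j uZ.
have H1' := dPhi_cp (lineZ3 a L) (lineW3 a L) b' j' uZ.
apply: (eq_trans (congr2 +%R (congr2 *%R H0 H0') (congr2 *%R H1 H1'))).
rewrite -!scalemxAl !entryZ !mul0r !subr0.
rewrite !mul1r; exact: kill _ _ (@i2 R).
Qed.
End Main2.

Lemma sum_split_ord (R : realType) m n (F : 'I_(m + n) -> R[i]) :
  \sum_(i < m + n) F i = \sum_(i < m) F (lshift n i) + \sum_(i < n) F (rshift m i).
Proof. by rewrite big_split_ord. Qed.

Lemma pair_sum (R : realType) (n m : nat) (F G : 'I_n -> 'I_m -> R[i]) :
  (forall k L, F k L + G k L = 0) ->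
  \sum_k \sum_L F k L + \sum_k \sum_L G k L = 0.
Proof.
move=> H; rewrite -big_split big1 // => k _; rewrite -big_split big1 // => L _; exact: H.
Qed.

Theorem proposition9p2 (R : realType) (p r : nat) (hp : (0 < p)%N) (hr : (0 < r)%N) :
  let Omega : set (Mat R p r -> R[i]) :=
    [set phi | exists (a : 'I_r) (j : 'I_p), phi = fun X => Phistar X a j] in
  (forall phi, Omega phi -> GL_invariant phi) /\
  orthogonal_harmonic_family (Vstar (R:=R) (p:=p) (r:=r)) Omega.
Proof.
move=> Omega; split.
  move=> phi [a [j ->]] X A [_ dZ] dA /=.
  by apply: GL_inv => //; rewrite unitmxE unitfE.
move=> phi psi [a [j ->]] [a' [j' ->]] X [_ dZ].
have uZ : Zof X \in unitmx by rewrite unitmxE unitfE.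
split.
  rewrite /tau big_split_ord /= big_split_ord /= big_split_ord /= addrA.
  apply: (eq_trans (congr2 +%R (pair_sum _) (pair_sum _)) (addr0 0)).
    by move=> k L; exact: (tau01 a j k L uZ).
  by move=> a0 L; exact: (eq_trans (congr2 +%R (tau2 a j a0 L uZ) (tau3 a j a0 L uZ)) (addr0 0)).
rewrite /kappa !sum_split_ord addrA.
apply: (eq_trans (congr2 +%R (pair_sum _) (pair_sum _)) (addr0 0)).
  by move=> k L; exact: (kap01 a j a' j' k L uZ).
by move=> a0 L; exact: (kap23 a j a' j' a0 L uZ).
Qed.
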